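(* Let $\mathbb X$ be a basic space and $\mathcal D=(D,<,\rho)$ a computable partially ordered set. The classes $\mathrm{Max}_{\mathrm{Rec}}[\mathbb X\to\mathcal D]$ and $\mathrm{Max}_{\mathrm{PR}}[\mathbb X\to\mathcal D]$ contain the same total functions: $\mathrm{Max}_{\mathrm{PR}}[\mathbb X\to\mathcal D]\cap D^{\mathbb X}=\mathrm{Max}_{\mathrm{Rec}}[\mathbb X\to\mathcal D]\cap D^{\mathbb X}$.
   Context: A basic space is a finite non-empty product of sets each of which is $\mathbb N$, $\mathbb Z$, or $A^*$ for some finite alphabet $A$. A computable partially ordered set is a triple $\mathcal D=(D,<,\rho)$ where $\rho:\mathbb N\to D$ is a bijection and $<$ is a strict partial order on $D$ with $\{(m,n):\rho(m)<\rho(n)\}$ computable; a partial function into $D$ is partial (resp. total) computable if its composition with $\rho^{-1}$ is. For a partial $f:\mathbb X\times\mathbb N\to D$ monotone increasing in its second argument on its domain, $\max^{\mathcal D}f$ is the partial function defined exactly at those $x$ for which $\{f(x,t):t,\ f(x,t)\text{ defined}\}$ is finite and non-empty, with value its maximum. $\mathrm{Max}_{\mathrm{PR}}[\mathbb X\to\mathcal D]$ (resp. $\mathrm{Max}_{\mathrm{Rec}}[\mathbb X\to\mathcal D]$) is the class of all $\max^{\mathcal D}f$ with $f$ partial computable (resp. total computable) and monotone increasing in its second argument. $D^{\mathbb X}$ is the set of total functions $\mathbb X\to D$. *)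

(* Defs.v *)
From mathcomp Require Import all_boot.
From mathcomp Require Import ssrint.

Set Implicit Arguments.
Unset Strict Implicit.
Unset Printing Implicit Defensive.

Inductive prf : nat -> Type :=
| prZero n : prf n
| prSucc : prf 1
| prProj n (i : 'I_n) : prf n
| prComp m n (f : prf m) (gs : seq (prf n)) : prf n
| prPrec n (g : prf n) (h : prf n.+2) : prf n.+1
| prMu n (g : prf n.+1) : prf n.

Inductive peval : forall n, prf n -> seq nat -> nat -> Prop :=
| ev_zero n xs : @peval n (prZero n) xs 0
| ev_succ x : peval prSucc [:: x] x.+1
| ev_proj n (i : 'I_n) xs : size xs = n -> peval (prProj i) xs (nth 0 xs i)
| ev_comp m n (f : prf m) (gs : seq (prf n)) xs ys y :
    size gs = m -> pevals gs xs ys -> peval f ys y -> peval (prComp f gs) xs y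
| ev_prec0 n (g : prf n) (h : prf n.+2) xs y :
    peval g xs y -> peval (prPrec g h) (0 :: xs) y
| ev_precS n (g : prf n) (h : prf n.+2) k xs z y :
    peval (prPrec g h) (k :: xs) z -> peval h (k :: z :: xs) y ->
    peval (prPrec g h) (k.+1 :: xs) y
| ev_mu n (g : prf n.+1) xs k :
    peval g (k :: xs) 0 ->
    (forall j, j < k -> exists2 v, v != 0 & peval g (j :: xs) v) ->
    peval (prMu g) xs k
with pevals : forall n, seq (prf n) -> seq nat -> seq nat -> Prop :=
| evs_nil n xs : @pevals n [::] xs [::]
| evs_cons n (g : prf n) gs xs y ys :
    peval g xs y -> pevals gs xs ys -> pevals (g :: gs) xs (y :: ys).

(* Basic spaces: finite non-empty products of N, Z and A^* with A a    *)
(* finite alphabet (taken as 'I_k).  Each component is coded by a      *)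
(* standard bijection with N, and a basic space is coded               *)
(* componentwise into N^n.                                             *)

Inductive bkind : Type := BNat | BInt | BWord of nat.

Definition bcomp (c : bkind) : Type :=
  match c with BNat => nat | BInt => int | BWord k => seq 'I_k end.

Definition code_int (z : int) : nat :=
  match z with Posz n => n.*2 | Negz n => n.*2.+1 end.

(* bijective base-k numeration of words over 'I_k *)
Fixpoint code_word k (w : seq 'I_k) : nat :=
  match w with [::] => 0 | a :: w' => (nat_of_ord a).+1 + k * code_word w' end.

Definition code_comp (c : bkind) : bcomp c -> nat :=
  match c return bcomp c -> nat with
  | BNat => fun n => n
  | BInt => code_int
  | BWord k => @code_word k
  end.

Fixpoint bspace (bs : seq bkind) : Type :=
  match bs with [::] => unit | c :: bs' => (bcomp c * bspace bs')%type end.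

Fixpoint bcodes (bs : seq bkind) : bspace bs -> seq nat :=
  match bs return bspace bs -> seq nat with
  | [::] => fun _ => [::]
  | c :: bs' => fun x => code_comp x.1 :: bcodes x.2
  end.

Definition strict_porder (D : Type) (lt : D -> D -> Prop) : Prop :=
  (forall x, ~ lt x x) /\ (forall x y z, lt x y -> lt y z -> lt x z).

Definition computable_poset (D : Type) (lt : D -> D -> Prop) (rho : nat -> D) : Prop :=
  [/\ strict_porder lt, bijective rho &
      exists t : prf 2, forall m n,
        (lt (rho m) (rho n) -> peval t [:: m; n] 1) /\
        (~ lt (rho m) (rho n) -> peval t [:: m; n] 0)].

Definition leD (D : Type) (lt : D -> D -> Prop) (a b : D) : Prop := lt a b \/ a = b.

Fixpoint inl_ (D : Type) (e : D) (l : seq D) : Prop :=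
  match l with [::] => False | a :: l' => a = e \/ inl_ e l' end.

(* f : X x N -> D partial, represented curried with option values.
   It is partial computable iff rho^-1 o f is partial recursive. *)
Definition pcomp2 (bs : seq bkind) (D : Type) (rho : nat -> D)
  (f : bspace bs -> nat -> option D) : Prop :=
  exists t : prf (size bs).+1, forall x s n,
    peval t (rcons (bcodes x) s) n <-> f x s = Some (rho n).

Definition tcomp2 (bs : seq bkind) (D : Type) (rho : nat -> D)
  (f : bspace bs -> nat -> D) : Prop :=
  pcomp2 rho (fun x s => Some (f x s)).

Definition monotone2 (X D : Type) (lt : D -> D -> Prop) (f : X -> nat -> option D) : Prop :=
  forall x s s' d d', s <= s' -> f x s = Some d -> f x s' = Some d' -> leD lt d d'.

Definition maxD_at (X D : Type) (lt : D -> D -> Prop) (f : X -> nat -> option D)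
  (x : X) (d : D) : Prop :=
  (exists l : list D, forall e, (exists s, f x s = Some e) <-> inl_ e l) /\
  (exists s, f x s = Some d) /\
  (forall s e, f x s = Some e -> leD lt e d).

Definition in_MaxPR (bs : seq bkind) (D : Type) (lt : D -> D -> Prop) (rho : nat -> D)
  (F : bspace bs -> D) : Prop :=
  exists f : bspace bs -> nat -> option D,
    [/\ pcomp2 rho f, monotone2 lt f & forall x, maxD_at lt f x (F x)].

Definition in_MaxRec (bs : seq bkind) (D : Type) (lt : D -> D -> Prop) (rho : nat -> D)
  (F : bspace bs -> D) : Prop :=
  exists f : bspace bs -> nat -> D,
    [/\ tcomp2 rho f, monotone2 lt (fun x s => Some (f x s)) &
        forall x, maxD_at lt (fun x s => Some (f x s)) x (F x)].

(* Main.v *)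
Require Import Defs.
From mathcomp Require Import all_boot.
From Stdlib Require Import Eqdep_dec PeanoNat Classical.
Set Implicit Arguments.
Unset Strict Implicit.
Unset Printing Implicit Defensive.

Fixpoint Alls (A : Type) (Q : A -> Prop) (l : seq A) : Prop :=
  if l is a :: l' then Q a /\ Alls Q l' else True.

Fixpoint prf_ind' (P : forall n, prf n -> Prop)
  (Hz : forall n, P n (prZero n)) (Hs : P 1 prSucc)
  (Hp : forall n (i : 'I_n), P n (prProj i))
  (Hc : forall m n (f : prf m) (gs : seq (prf n)), P m f -> Alls (P n) gs -> P n (prComp f gs))
  (Hr : forall n (g : prf n) (h : prf n.+2), P n g -> P n.+2 h -> P n.+1 (prPrec g h))
  (Hm : forall n (g : prf n.+1), P n.+1 g -> P n (prMu g))
  n (t : prf n) {struct t} : P n t :=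
  match t with
  | prZero n => Hz n
  | prSucc => Hs
  | prProj n i => Hp n i
  | prComp m n f gs => Hc m n f gs (prf_ind' Hz Hs Hp Hc Hr Hm f)
      ((fix go (gs : seq (prf n)) : Alls (P n) gs :=
         match gs with [::] => I | g :: gs' => conj (prf_ind' Hz Hs Hp Hc Hr Hm g) (go gs') end) gs)
  | prPrec n g h => Hr n g h (prf_ind' Hz Hs Hp Hc Hr Hm g) (prf_ind' Hz Hs Hp Hc Hr Hm h)
  | prMu n g => Hm n g (prf_ind' Hz Hs Hp Hc Hr Hm g)
  end.

Fixpoint oall (A : Type) (F : A -> option nat) (l : seq A) : option (seq nat) :=
  match l with
  | [::] => Some [::]
  | a :: l' => match F a, oall F l' with Some y, Some ys => Some (y :: ys) | _, _ => None end
  end.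

Fixpoint prec_it (G H : seq nat -> option nat) (xs : seq nat) (k : nat) : option nat :=
  match k with
  | 0 => G xs
  | k'.+1 => match prec_it G H xs k' with Some z => H (k' :: z :: xs) | None => None end
  end.

Fixpoint mu_st (G : nat -> option nat) (r : nat) : nat :=
  match r with
  | 0 => 0
  | r'.+1 => if mu_st G r' != 0 then mu_st G r' else
      match G r' with None => 1 | Some 0 => r'.+2 | Some _ => 0 end
  end.

Definition mu_res (s : nat) : option nat := if s is k.+2 then Some k else None.

Fixpoint clk n (t : prf n) (c : nat) (xs : seq nat) {struct t} : option nat :=
  match t with
  | prZero _ => Some 0
  | prSucc => if xs is [:: x] then Some x.+1 else None
  | prProj n i => if size xs == n then Some (nth 0 xs i) else None
  | prComp m n f gs =>
      if size gs == m then
        match oall (fun g => clk g c xs) gs with Some ys => clk f c ys | None => None end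
      else None
  | prPrec n g h => if xs is k :: xs' then prec_it (clk g c) (clk h c) xs' k else None
  | prMu n g => mu_res (mu_st (fun j => clk g c (j :: xs)) c)
  end.

Lemma Alls_impl A (P Q : A -> Prop) l : (forall a, P a -> Q a) -> Alls P l -> Alls Q l.
Proof. move=> H; elim: l => //= a l IH [] /H ? /IH; by split. Qed.

Lemma mu_st0 G r : mu_st G r = 0 -> forall j, j < r -> exists v, G j = Some v.+1.
Proof.
elim: r => //= r IH.
case: (mu_st G r =P 0) => E; last by move=> /= H; case: E.
rewrite /=.
case Gr: (G r) => [[|v]|] //= _ j.
rewrite ltnS leq_eqVlt => /orP [/eqP -> | jr]; first by exists v.
exact: IH.
Qed.

Lemma mu_st0' G r : (forall j, j < r -> exists v, G j = Some v.+1) -> mu_st G r = 0.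
Proof.
elim: r => //= r IH H.
rewrite IH; last by move=> j jr; apply: H; apply: ltnW.
have [v ->] := H r (ltnSn r). done.
Qed.

Lemma mu_stP G r k : mu_st G r = k.+2 <->
  [/\ k < r, G k = Some 0 & forall j, j < k -> exists v, G j = Some v.+1].
Proof.
elim: r => [|r IH] /=; first by split => // -[].
split.
- case: (mu_st G r =P 0) => E.
  + rewrite /=.
    case Gr: (G r) => [[|v]|] //= [] <-.
    by split => //; apply: mu_st0.
  + move=> /= H; rewrite H in IH; have [kr ? ?] := (proj1 IH) erefl.
    by split => //; apply: ltnW.
- move=> [kr Gk Hj].
  move: kr; rewrite ltnS leq_eqVlt => /orP [/eqP kr | kr].
  + subst k. by rewrite mu_st0' //= Gk.
  + have -> : mu_st G r = k.+2 by apply IH.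
    done.
Qed.

Lemma oall_mono A (F F' : A -> option nat) l ys :
  Alls (fun a => forall y, F a = Some y -> F' a = Some y) l ->
  oall F l = Some ys -> oall F' l = Some ys.
Proof.
elim: l ys => //= a l IH ys [Ha Hl].
case Fa: (F a) => [y|] //; case Fl: (oall F l) => [zs|] // [<-].
by rewrite (Ha _ Fa) (IH _ Hl Fl).
Qed.

Lemma prec_it_mono G H G' H' xs k y :
  (forall zs y, G zs = Some y -> G' zs = Some y) ->
  (forall zs y, H zs = Some y -> H' zs = Some y) ->
  prec_it G H xs k = Some y -> prec_it G' H' xs k = Some y.
Proof.
move=> HG HH; elim: k y => [|k IH] y /=; first exact: HG.
case E: (prec_it G H xs k) => [z|] //. by rewrite (IH _ E); apply: HH.
Qed.

Lemma clk_mono n (t : prf n) c c' xs y : c <= c' -> clk t c xs = Some y -> clk t c' xs = Some y.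
Proof.
move: c c' xs y; elim/prf_ind': n / t.
- by [].
- by [].
- by [].
- move=> m n f gs IHf IHgs c c' xs y cc /=.
  case: (size gs == m) => //.
  case E: (oall _ gs) => [ys|] // H.
  rewrite (oall_mono (F := fun g => clk g c xs) _ E); first exact: IHf H.
  by apply: Alls_impl IHgs => g Hg y'; apply: Hg.
- move=> n g h IHg IHh c c' [|k xs] y cc //=.
  apply: prec_it_mono => zs y'; [exact: IHg | exact: IHh].
- move=> n g IHg c c' xs y cc /=.
  case E: (mu_st _ c) => [|[|k]] //= [<-].
  have [kc Gk Hj] := (proj1 (mu_stP _ _ _)) E.
  have -> : mu_st (fun j => clk g c' (j :: xs)) c' = k.+2; last by [].
  apply/mu_stP; split.
  + exact: leq_trans kc cc.
  + exact: IHg Gk.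
  + move=> j /Hj [v Hv]; exists v; exact: IHg Hv.
Qed.

Lemma clk_sound n (t : prf n) c xs y : clk t c xs = Some y -> peval t xs y.
Proof.
move: xs y; elim/prf_ind': n / t.
- by move=> n xs y [<-]; constructor.
- by move=> [|x [|]] y //= [<-]; constructor.
- by move=> n i xs y /=; case: eqP => // Hs [<-]; constructor.
- move=> m n f gs IHf IHgs xs y /=.
  case: eqP => // Hs.
  case E: (oall _ gs) => [ys|] // H.
  apply: (ev_comp (ys := ys)) => //; last exact: IHf.
  clear H IHf Hs; elim: gs ys IHgs E => [|g gs IH] ys /=; first by move=> _ [<-]; constructor.
  move=> [Hg Hgs].
  case Eg: (clk g c xs) => [z|] //; case Egs: (oall _ gs) => [zs|] // [<-].
  constructor; [exact: Hg | exact: IH].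
- move=> n g h IHg IHh [|k xs] y //=.
  elim: k y => [|k IH] y /=; first by move=> /IHg H; constructor.
  case E: (prec_it _ _ _ k) => [z|] // /IHh H.
  apply: ev_precS H; exact: IH.
- move=> n g IHg xs y /=.
  case E: (mu_st _ c) => [|[|k]] //= [<-].
  have [kc Gk Hj] := (proj1 (mu_stP _ _ _)) E.
  constructor; first exact: IHg.
  by move=> j /Hj [v /IHg Hv]; exists v.+1.
Qed.

Ltac injall := repeat match goal with H : existT _ _ _ = existT _ _ _ |- _ =>
   apply (Eqdep_dec.inj_pair2_eq_dec _ PeanoNat.Nat.eq_dec) in H end; subst.
Ltac inv H := inversion H; clear H; subst; injall.

Lemma clk_up n (t : prf n) xs y :
  (exists c, clk t c xs = Some y) -> exists c, forall c', c <= c' -> clk t c' xs = Some y.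
Proof. by move=> [c H]; exists c => c' cc; apply: clk_mono H. Qed.

Lemma clk_complete n (t : prf n) xs y : peval t xs y -> exists c, clk t c xs = Some y.
Proof.
move: xs y; elim/prf_ind': n / t.
- move=> n xs y H; inv H; by exists 0.
- move=> xs y H; inv H; by exists 0.
- move=> n i xs y H; inv H. exists 0 => /=. by rewrite eqxx.
- move=> m n f gs IHf IHgs xs y H; inv H.
  match goal with Hf : peval f _ _ |- _ => rename Hf into Hff end.
  match goal with Hs : pevals gs _ _ |- _ => rename Hs into Hgs end.
  have [c1 Hc1] := clk_up (IHf _ _ Hff).
  suff [c2 Hc2] : exists c2, forall c', c2 <= c' -> oall (fun g => clk g c' xs) gs = Some ys.
    exists (maxn c1 c2) => /=; rewrite eqxx Hc2 ?leq_maxr //; exact: Hc1 (leq_maxl _ _).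
  clear Hc1 IHf.
  clear Hff f c1; elim: gs ys IHgs Hgs => [|g gs IH] ys /= IHgs Hs.
  + exists 0 => c' _; inv Hs; done.
  + inv Hs. case: IHgs => Ig Igs.
    match goal with Hg : peval g _ _ |- _ => rename Hg into Hgg end.
    match goal with Hs : pevals gs _ _ |- _ => rename Hs into Hss end.
    have [c1 Hc1] := clk_up (Ig _ _ Hgg); have [c2 Hc2] := IH _ Igs Hss.
    exists (maxn c1 c2) => c' cc.
    by rewrite Hc1 ?Hc2 //; [exact: leq_trans (leq_maxr _ _) cc | exact: leq_trans (leq_maxl _ _) cc].
- move=> n g h IHg IHh xs y H.
  have Hk: forall k xs' y, peval (prPrec g h) (k :: xs') y ->
      exists c, forall c', c <= c' -> prec_it (clk g c') (clk h c') xs' k = Some y.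
    elim=> [|k IHk] xs' y' H'; inv H'.
    + match goal with Hg : peval g _ _ |- _ => have [c Hc] := clk_up (IHg _ _ Hg) end. by exists c.
    + match goal with Hp : peval (prPrec g h) _ _, Hh : peval h _ _ |- _ =>
        have [c1 Hc1] := IHk _ _ Hp; have [c2 Hc2] := clk_up (IHh _ _ Hh) end.
      exists (maxn c1 c2) => c' cc /=.
      by rewrite Hc1 ?Hc2 //; [exact: leq_trans (leq_maxr _ _) cc | exact: leq_trans (leq_maxl _ _) cc].
  case: xs H => [|k xs'] H; first by inversion H.
  have [c Hc] := Hk _ _ _ H. by exists c; apply: Hc.
- move=> n g IHg xs y H; inv H.
  match goal with H1 : peval g _ 0, H3 : forall j, _ |- _ => 
    have [c1 Hc1] := clk_up (IHg _ _ H1); move: H3; clear H1 => H3 end.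
  have [c2 Hc2] : exists c, forall j, j < y -> exists v, clk g c (j :: xs) = Some v.+1.
    clear Hc1.
    elim: y H3 => [|y IHy] Hy; first by exists 0.
    have [c2 Hc2] := IHy (fun j jy => Hy j (ltnW jy)).
    have [[|v] vn Hv] := Hy y (ltnSn y); first by [].
    have [c3 Hc3] := clk_up (IHg _ _ Hv).
    exists (maxn c2 c3) => j; rewrite ltnS leq_eqVlt => /orP [/eqP -> | jy].
    * by exists v; apply: Hc3; apply: leq_maxr.
    * have [w Hw] := Hc2 _ jy. exists w. apply: clk_mono Hw. exact: leq_maxl.
  exists (maxn (maxn c1 c2) y.+1) => /=.
  have -> : mu_st (fun j => clk g (maxn (maxn c1 c2) y.+1) (j :: xs)) (maxn (maxn c1 c2) y.+1) = y.+2; last by [].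
  apply/mu_stP; split.
  + by rewrite leq_max ltnSn orbT.
  + apply: Hc1. by rewrite !leq_max leqnn.
  + move=> j /Hc2 [w Hw]; exists w; apply: clk_mono Hw. by rewrite !leq_max leqnn orbT.
Qed.

Lemma peval_det n (t : prf n) xs y y' : peval t xs y -> peval t xs y' -> y = y'.
Proof.
move=> /clk_complete [c1 H1] /clk_complete [c2 H2].
have := clk_mono (leq_maxl c1 c2) H1; rewrite (clk_mono (leq_maxr c1 c2) H2). by case.
Qed.

Definition rec n (F : seq nat -> nat) :=
  exists t : prf n, forall xs, size xs = n -> peval t xs (F xs).

Lemma rec_ext n F G : rec n F -> (forall xs, size xs = n -> F xs = G xs) -> rec n G.
Proof. move=> [t Ht] E; exists t => xs Hs; rewrite -E //; exact: Ht. Qed.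

Lemma rec_zero n : rec n (fun _ => 0).
Proof. exists (prZero n) => xs _; constructor. Qed.

Lemma rec_succ : rec 1 (fun xs => (head 0 xs).+1).
Proof. exists prSucc => [[|x [|]]] //= _; constructor. Qed.

Lemma rec_proj n i : i < n -> rec n (fun xs => nth 0 xs i).
Proof. move=> Hi; exists (prProj (Ordinal Hi)) => xs Hs; exact: ev_proj. Qed.

Lemma rec_comp m n F (Gs : seq (seq nat -> nat)) : size Gs = m -> rec m F -> Alls (rec n) Gs ->
  rec n (fun xs => F (map (fun G => G xs) Gs)).
Proof.
move=> Hm [f Hf] HGs.
suff [ts [Hts Hev]] : exists ts : seq (prf n), size ts = size Gs /\
    forall xs, size xs = n -> pevals ts xs (map (fun G => G xs) Gs).
  exists (prComp f ts) => xs Hs.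
  apply: ev_comp; [by rewrite Hts | exact: Hev | apply: Hf; by rewrite size_map].
elim: Gs {Hm} HGs => [|G Gs IH] /= => [_|[[t Ht] /IH [ts [Hts Hev]]]].
  by exists [::]; split => // xs _; constructor.
exists (t :: ts); split; first by rewrite /= Hts.
by move=> xs Hs; constructor; [exact: Ht | exact: Hev].
Qed.

Fixpoint precF (G H : seq nat -> nat) (xs : seq nat) (k : nat) : nat :=
  match k with 0 => G xs | k'.+1 => H (k' :: precF G H xs k' :: xs) end.

Lemma rec_prec n G H : rec n G -> rec n.+2 H ->
  rec n.+1 (fun xs => precF G H (behead xs) (head 0 xs)).
Proof.
move=> [g Hg] [h Hh]; exists (prPrec g h) => [[|k xs]] //= [Hs].
elim: k => [|k IH] /=; first by constructor; apply: Hg.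
apply: ev_precS IH _; apply: Hh; by rewrite /= Hs.
Qed.

Lemma rec_comp1 n (u : nat -> nat) G : rec 1 (fun xs => u (head 0 xs)) -> rec n G ->
  rec n (fun xs => u (G xs)).
Proof.
move=> Hu HG. have := rec_comp (Gs := [:: G]) (n := n) erefl Hu (conj HG I). by [].
Qed.

Lemma rec_comp2 n (b : nat -> nat -> nat) G1 G2 :
  rec 2 (fun xs => b (nth 0 xs 0) (nth 0 xs 1)) -> rec n G1 -> rec n G2 ->
  rec n (fun xs => b (G1 xs) (G2 xs)).
Proof.
move=> Hb H1 H2. have := rec_comp (Gs := [:: G1; G2]) (n := n) erefl Hb (conj H1 (conj H2 I)). by [].
Qed.

Lemma rec_comp3 n (b : nat -> nat -> nat -> nat) G1 G2 G3 :
  rec 3 (fun xs => b (nth 0 xs 0) (nth 0 xs 1) (nth 0 xs 2)) -> rec n G1 -> rec n G2 -> rec n G3 ->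
  rec n (fun xs => b (G1 xs) (G2 xs) (G3 xs)).
Proof.
move=> Hb H1 H2 H3.
have := rec_comp (Gs := [:: G1; G2; G3]) (n := n) erefl Hb (conj H1 (conj H2 (conj H3 I))). by [].
Qed.

Lemma rec_const n k : rec n (fun _ => k).
Proof.
elim: k => [|k IH]; first exact: rec_zero.
exact: (rec_comp1 (u := S) rec_succ IH).
Qed.

Lemma rec_pred : rec 1 (fun xs => (head 0 xs).-1).
Proof.
have := rec_prec (G := fun _ => 0) (H := fun xs => head 0 xs) (rec_zero 0) (rec_proj (n := 2) (i := 0) erefl).
move/rec_ext; apply=> [[|k [|]]] //= _. by case: k.
Qed.

Lemma rec_ifz : rec 3 (fun xs => if nth 0 xs 0 == 0 then nth 0 xs 1 else nth 0 xs 2).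
Proof.
have := rec_prec (G := fun xs => nth 0 xs 0) (H := fun xs => nth 0 xs 3)
   (rec_proj (n := 2) (i := 0) erefl) (rec_proj (n := 4) (i := 3) erefl).
move/rec_ext; apply=> [[|k [|b [|d [|]]]]] //= _. by case: k.
Qed.

Lemma rec_add : rec 2 (fun xs => nth 0 xs 0 + nth 0 xs 1).
Proof.
have := rec_prec (G := fun xs => nth 0 xs 0) (H := fun xs => (nth 0 xs 1).+1)
   (rec_proj (n := 1) (i := 0) erefl) (rec_comp1 (u := S) rec_succ (rec_proj (n := 3) (i := 1) erefl)).
move/rec_ext; apply=> [[|k [|t [|]]]] //= _.
by elim: k => //= k ->.
Qed.

Definition projs (d k : nat) : seq (seq nat -> nat) := [seq (fun xs => nth 0 xs i) | i <- iota d k].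

Lemma rec_projs N d k : d + k <= N -> Alls (rec N) (projs d k).
Proof.
rewrite /projs; elim: k d => [|k IH] d //= Hdk; split.
- apply: rec_proj. by rewrite -addn1 (leq_trans _ Hdk) // leq_add2l.
- apply: IH. by rewrite addSn -addnS.
Qed.

Lemma map_projs xs d k : d + k <= size xs ->
  map (fun G => G xs) (projs d k) = take k (drop d xs).
Proof.
move=> H; rewrite /projs -map_comp /=. apply: map_nth_iota. by rewrite leq_subRL // (leq_trans (leq_addr k d)).
Qed.

Lemma size_projs d k : size (projs d k) = k.
Proof. by rewrite size_map size_iota. Qed.

Lemma rec_seq n (Gs : seq (seq nat -> nat)) : Alls (rec n) Gs ->
  exists ts : seq (prf n), size ts = size Gs /\
    forall xs, size xs = n -> pevals ts xs (map (fun G => G xs) Gs).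
Proof.
elim: Gs => [|G Gs IH] /= => [_|[[t Ht] /IH [ts [Hts Hev]]]].
  by exists [::]; split => // xs _; constructor.
exists (t :: ts); split; first by rewrite /= Hts.
by move=> xs Hs; constructor; [exact: Ht | exact: Hev].
Qed.

Definition ocode (o : option nat) : nat := if o is Some y then y.+1 else 0.
Definition CL n (t : prf n) : seq nat -> nat :=
  fun cxs => ocode (clk t (head 0 cxs) (behead cxs)).

Lemma Alls_cat A (P : A -> Prop) l1 l2 : Alls P l1 -> Alls P l2 -> Alls P (l1 ++ l2).
Proof. elim: l1 => //= a l IH [Ha Hl] H2; split => //; exact: IH. Qed.

Lemma Alls_map A B (P : B -> Prop) (f : A -> B) l : Alls (fun a => P (f a)) l -> Alls P (map f l).
Proof. by elim: l => //= a l IH [Ha Hl]; split => //; apply: IH. Qed.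

Lemma take_drop_full (xs : seq nat) d k : size xs = d + k -> take k (drop d xs) = drop d xs.
Proof. move=> H; apply: take_oversize; by rewrite size_drop H addKn. Qed.

Lemma clk_comp_fold m n (f : prf m) (gs : seq (prf n)) c xs X :
  foldr (fun g acc => if CL g (c :: xs) == 0 then 0 else acc) X gs =
  if oall (fun g => clk g c xs) gs is Some _ then X else 0.
Proof.
elim: gs => //= g gs ->; rewrite /CL /=.
by case: (clk g c xs) => //= y; case: (oall _ gs).
Qed.

Lemma oall_map n (gs : seq (prf n)) c xs ys :
  oall (fun g => clk g c xs) gs = Some ys -> ys = map (fun g => (CL g (c :: xs)).-1) gs.
Proof.
elim: gs ys => [|g gs IH] ys /=; first by case=> <-.
rewrite /CL /=; case: (clk g c xs) => // y; case E: (oall _ gs) => [zs|] // [<-].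
by rewrite (IH _ E).
Qed.

Lemma rec_clk_comp m n (f : prf m) (gs : seq (prf n)) :
  rec m.+1 (CL f) -> Alls (fun g => rec n.+1 (CL g)) gs -> rec n.+1 (CL (prComp f gs)).
Proof.
move=> IHf IHgs.
case: (size gs =P m) => Hm; last first.
  apply: rec_ext (rec_const _ 0) _ => xs _; rewrite /CL /=. by case: eqP.
pose Inner := fun cxs => CL f (head 0 cxs :: map (fun g => (CL g cxs).-1) gs).
have HI : rec n.+1 Inner.
  pose Gs := (fun cxs : seq nat => head 0 cxs) :: map (fun g cxs => (CL g cxs).-1) gs.
  have Hs : size Gs = m.+1 by rewrite /= size_map Hm.
  have Ha : Alls (rec n.+1) Gs.
    split; first by apply: (rec_proj (i := 0)).
    apply: Alls_map; apply: Alls_impl IHgs => g Hg. exact: rec_comp1 rec_pred Hg.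
  have := rec_comp Hs IHf Ha.
  move/rec_ext; apply => xs _ /=. by rewrite /Inner -map_comp.
have HC : forall l : seq (prf n), Alls (fun g => rec n.+1 (CL g)) l ->
    rec n.+1 (fun cxs => foldr (fun g acc => if CL g cxs == 0 then 0 else acc) (Inner cxs) l).
  elim=> [|g l IH] HA; first by [].
  case: HA => Hg /IH Hl.
  exact: (rec_comp3 (b := fun a b d => if a == 0 then b else d)) rec_ifz Hg (rec_const _ 0) Hl.
apply: rec_ext (HC _ IHgs) _ => [[|c xs]] //= _.
rewrite (clk_comp_fold f) /CL /= Hm eqxx.
case E: (oall _ gs) => [ys|] //.
by rewrite (oall_map E).
Qed.

Lemma rec_clk_prec n (g : prf n) (h : prf n.+2) :
  rec n.+1 (CL g) -> rec n.+3 (CL h) -> rec n.+2 (CL (prPrec g h)).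
Proof.
move=> IHg IHh.
pose HH := fun w : seq nat => CL h (nth 0 w 2 :: nth 0 w 0 :: (nth 0 w 1).-1 :: drop 3 w).
have RHH : rec n.+3 HH.
  pose Gs := [:: (fun w : seq nat => nth 0 w 2); (fun w => nth 0 w 0); (fun w => (nth 0 w 1).-1)] ++ projs 3 n.
  have Hs : size Gs = n.+3 by rewrite size_cat size_projs !addSn add0n.
  have Ha : Alls (rec n.+3) Gs.
    apply: Alls_cat; last by apply: rec_projs; rewrite !addSn add0n.
    split; first by apply: rec_proj. split; first by apply: rec_proj.
    split => //. apply: rec_comp1 rec_pred (rec_proj _) => //.
  have := rec_comp Hs IHh Ha.
  move/rec_ext; apply => w Hw. rewrite /HH map_cat map_projs; last by rewrite Hw !addSn add0n.
  by rewrite take_drop_full // Hw !addSn add0n.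
pose H' := fun w : seq nat => if nth 0 w 1 == 0 then 0 else HH w.
have RH' : rec n.+3 H'.
  exact: (rec_comp3 (b := fun a b d => if a == 0 then b else d)) rec_ifz (rec_proj _) (rec_const _ 0) RHH.
have RQ := rec_prec IHg RH'.
pose Gs := [:: (fun w : seq nat => nth 0 w 1); (fun w => nth 0 w 0)] ++ projs 2 n.
have Hs : size Gs = n.+2 by rewrite size_cat size_projs !addSn add0n.
have Ha : Alls (rec n.+2) Gs.
  apply: Alls_cat; last by apply: rec_projs; rewrite !addSn add0n.
  split; first by apply: rec_proj. split; first by apply: rec_proj. done.
have := rec_comp Hs RQ Ha.
move/rec_ext; apply => [[|c [|k xs]]] // [Hw].
rewrite map_cat map_projs /=; last by rewrite Hw !addSn add0n.
rewrite take_oversize; last by rewrite size_drop /= Hw subn0.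
have E0 : drop 0 xs = xs by apply: drop0.
rewrite E0 /CL /=.
elim: k => [|k IH] //=.
rewrite IH /H' /HH /=.
case: (prec_it _ _ _ k) => //= z.
by rewrite E0.
Qed.

Lemma rec_clk_mu n (g : prf n.+1) : rec n.+2 (CL g) -> rec n.+1 (CL (prMu g)).
Proof.
move=> IHg.
pose v := fun w : seq nat => CL g (nth 0 w 2 :: nth 0 w 0 :: drop 3 w).
have Rv : rec n.+3 v.
  pose Gs := [:: (fun w : seq nat => nth 0 w 2); (fun w => nth 0 w 0)] ++ projs 3 n.
  have Hs : size Gs = n.+2 by rewrite size_cat size_projs !addSn add0n.
  have Ha : Alls (rec n.+3) Gs.
    apply: Alls_cat; last by apply: rec_projs; rewrite !addSn add0n.
    split; first by apply: rec_proj. split; first by apply: rec_proj. done.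
  have := rec_comp Hs IHg Ha.
  move/rec_ext; apply => w Hw. rewrite /v map_cat map_projs; last by rewrite Hw !addSn add0n.
  by rewrite take_drop_full // Hw !addSn add0n.
pose V := fun w => if v w == 0 then 1 else if (v w).-1 == 0 then (nth 0 w 0).+2 else 0.
have RV : rec n.+3 V.
  apply: (rec_comp3 (b := fun a b d => if a == 0 then b else d)) rec_ifz (Rv) (rec_const _ 1) _.
  apply: (rec_comp3 (b := fun a b d => if a == 0 then b else d)) rec_ifz _ _ (rec_const _ 0).
  - exact: rec_comp1 rec_pred Rv.
  - apply: (rec_comp1 (u := S) (G := fun xs => (nth 0 xs 0).+1) rec_succ). apply: (rec_comp1 (u := S) (G := fun xs => nth 0 xs 0) rec_succ). by apply: rec_proj.
pose H'' := fun w : seq nat => if nth 0 w 1 == 0 then V w else nth 0 w 1.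
have RH : rec n.+3 H''.
  apply: (rec_comp3 (b := fun a b d => if a == 0 then b else d)) rec_ifz _ (RV) _; by apply: rec_proj.
have RS := rec_prec (rec_const n.+1 0) RH.
pose Gs := [:: (fun w : seq nat => nth 0 w 0); (fun w => nth 0 w 0)] ++ projs 1 n.
have Hs : size Gs = n.+2 by rewrite size_cat size_projs !addSn add0n.
have Ha : Alls (rec n.+1) Gs.
  apply: Alls_cat; last by apply: rec_projs; rewrite !addSn add0n.
  split; first by apply: rec_proj. split; first by apply: rec_proj. done.
have := rec_comp1 rec_pred (rec_comp Hs RS Ha).
move/rec_ext; apply => [[|c xs]] // [Hw].
rewrite map_cat map_projs /=; last by rewrite Hw !addSn add0n.
rewrite take_oversize; last by rewrite size_drop /= Hw subn0.
have E0 : drop 0 xs = xs by apply: drop0.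
rewrite E0 /CL /=.
suff -> : forall r, precF (fun _ => 0) H'' (c :: xs) r = mu_st (fun j => clk g c (j :: xs)) r.
  by case: (mu_st _ c) => [|[|k]].
elim=> [|r IH] //=.
rewrite IH /H'' /V /v /= E0 /CL /=.
case: (mu_st _ r) => [|m] //=.
by case: (clk g c (r :: xs)) => [[|y]|].
Qed.

Theorem rec_clk n (t : prf n) : rec n.+1 (CL t).
Proof.
elim/prf_ind': n / t.
- move=> n; apply: rec_ext (rec_const _ 1) _ => xs _. by [].
- apply: rec_ext (rec_comp1 (u := S) rec_succ (rec_comp1 (u := S) rec_succ (rec_proj (n := 2) (i := 1) erefl))) _.
  by move=> [|c [|x [|]]].
- move=> n i.
  apply: rec_ext (rec_comp1 (u := S) rec_succ (rec_proj (n := n.+1) (i := i.+1) (ltn_ord i))) _.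
  move=> [|c xs] //= [Hs]; by rewrite /CL /= Hs eqxx.
- move=> m n f gs; exact: rec_clk_comp.
- move=> n g h; exact: rec_clk_prec.
- move=> n g; exact: rec_clk_mu.
Qed.

Definition Kf N (tf : prf N.+1) c s cs := ocode (clk tf c (rcons cs s)).

Lemma rec_Kf N (tf : prf N.+1) : rec N.+2 (fun w => Kf tf (nth 0 w 0) (nth 0 w 1) (drop 2 w)).
Proof.
pose Gs := [:: (fun w : seq nat => nth 0 w 0)] ++ projs 2 N ++ [:: (fun w => nth 0 w 1)].
have Hs : size Gs = N.+2 by rewrite !size_cat size_projs /= addn1.
have Ha : Alls (rec N.+2) Gs.
  apply: Alls_cat; first by split => //; apply: rec_proj.
  apply: Alls_cat; first by apply: rec_projs; rewrite !addSn add0n.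
  by split => //; apply: rec_proj.
have := rec_comp Hs (rec_clk tf) Ha.
move/rec_ext; apply => w Hw.
rewrite !map_cat map_projs; last by rewrite Hw !addSn add0n.
rewrite take_drop_full; last by rewrite Hw !addSn add0n.
by rewrite /CL /Kf /= cats1.
Qed.

Fixpoint smax N (tf : prf N.+1) B cs r : nat :=
  match r with 0 => 0 | r'.+1 => if Kf tf B r' cs == 0 then smax tf B cs r' else r' end.

Lemma rec_smax N (tf : prf N.+1) : rec N.+2 (fun w => smax tf (nth 0 w 1) (drop 2 w) (nth 0 w 0)).
Proof.
have HK : rec N.+3 (fun w => Kf tf (nth 0 w 2) (nth 0 w 0) (drop 3 w)).
  pose Gs := [:: (fun w : seq nat => nth 0 w 2); (fun w => nth 0 w 0)] ++ projs 3 N.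
  have Hs : size Gs = N.+2 by rewrite size_cat size_projs !addSn add0n.
  have Ha : Alls (rec N.+3) Gs.
    apply: Alls_cat; last by apply: rec_projs; rewrite !addSn add0n.
    split; first by apply: rec_proj. split; first by apply: rec_proj. done.
  have := rec_comp Hs (rec_Kf tf) Ha.
  move/rec_ext; apply => w Hw. rewrite map_cat map_projs; last by rewrite Hw !addSn add0n.
  rewrite take_drop_full; last by rewrite Hw !addSn add0n.
  by rewrite /= ?drop0.
have HH : rec N.+3 (fun w => if Kf tf (nth 0 w 2) (nth 0 w 0) (drop 3 w) == 0 then nth 0 w 1 else nth 0 w 0).
  apply: (rec_comp3 (b := fun a b d => if a == 0 then b else d)) rec_ifz (HK) _ _; by apply: rec_proj.
have := rec_prec (rec_const N.+1 0) HH.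
move/rec_ext; apply => [[|r [|B cs]]] // _ /=.
by elim: r => //= r ->.
Qed.

Lemma rec_E N (tf : prf N.+1) :
  rec N.+1 (fun w => Kf tf (nth 0 w 0) (smax tf (nth 0 w 0) (drop 1 w) (nth 0 w 0).+1) (drop 1 w)).
Proof.
have HS : rec N.+1 (fun w => smax tf (nth 0 w 0) (drop 1 w) (nth 0 w 0).+1).
  pose Gs := [:: (fun w : seq nat => (nth 0 w 0).+1); (fun w => nth 0 w 0)] ++ projs 1 N.
  have Hs : size Gs = N.+2 by rewrite size_cat size_projs !addSn add0n.
  have Ha : Alls (rec N.+1) Gs.
    apply: Alls_cat; last by apply: rec_projs; rewrite !addSn add0n.
    split; first by apply: (rec_comp1 (u := S) (G := fun w => nth 0 w 0) rec_succ); apply: rec_proj.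
    split; first by apply: rec_proj. done.
  have := rec_comp Hs (rec_smax tf) Ha.
  move/rec_ext; apply => w Hw. rewrite map_cat map_projs; last by rewrite Hw !addSn add0n.
  rewrite take_drop_full; last by rewrite Hw !addSn add0n.
  by rewrite /= ?drop0.
pose Gs := [:: (fun w : seq nat => nth 0 w 0); (fun w => smax tf (nth 0 w 0) (drop 1 w) (nth 0 w 0).+1)] ++ projs 1 N.
have Hs : size Gs = N.+2 by rewrite size_cat size_projs !addSn add0n.
have Ha : Alls (rec N.+1) Gs.
  apply: Alls_cat; last by apply: rec_projs; rewrite !addSn add0n.
  split; first by apply: rec_proj. by split.
have := rec_comp Hs (rec_Kf tf) Ha.
move/rec_ext; apply => w Hw. rewrite map_cat map_projs; last by rewrite Hw !addSn add0n.
rewrite take_drop_full; last by rewrite Hw !addSn add0n.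
  by rewrite /= ?drop0.
Qed.

Lemma build N (Z : seq nat -> nat) (Gt : seq nat -> nat) : rec N.+1 Z -> rec N.+2 Gt ->
  exists T : prf N.+1, forall cs t p, size cs = N -> Z (p :: cs) = 0 ->
    (forall j, j < p -> Z (j :: cs) != 0) -> peval T (rcons cs t) (Gt (p :: t :: cs)).
Proof.
move=> [tZ HtZ] [tG HtG].
have [ps [Hps Hev]] := rec_seq (rec_projs (N := N.+1) (d := 0) (k := N) (leqnSn N)).
rewrite size_projs in Hps.
exists (prComp tG (prComp (prMu tZ) ps :: prProj (ord_max : 'I_N.+1) :: ps)) => cs t p Hcs Hp Hj.
have Hsz : size (rcons cs t) = N.+1 by rewrite size_rcons Hcs.
have Hmap : map (fun G => G (rcons cs t)) (projs 0 N) = cs.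
  by rewrite map_projs ?size_rcons ?Hcs // drop0 -cats1 -Hcs take_size_cat.
apply: (ev_comp (ys := p :: t :: cs)); first by rewrite /= Hps.
- constructor.
  + apply: (ev_comp (ys := cs)); first by [].
    * by have := Hev _ Hsz; rewrite Hmap.
    * constructor; first by rewrite -Hp; apply: HtZ; rewrite /= Hcs.
      move=> j /Hj Hz. exists (Z (j :: cs)) => //. apply: HtZ. by rewrite /= Hcs.
  + constructor.
    * have := ev_proj (ord_max : 'I_N.+1) Hsz.
      by rewrite nth_rcons Hcs ltnn eqxx.
    * by have := Hev _ Hsz; rewrite Hmap.
- apply: HtG. by rewrite /= Hcs.
Qed.

Lemma smax_le N (tf : prf N.+1) B cs r : smax tf B cs r <= r.-1.
Proof.
elim: r => //= r IH. case: ifP => _ //. apply: leq_trans IH _. by case: r.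
Qed.

Lemma smax_spec N (tf : prf N.+1) B cs r :
  (exists2 s, s < r & Kf tf B s cs != 0) ->
  Kf tf B (smax tf B cs r) cs != 0 /\ forall s, s < r -> Kf tf B s cs != 0 -> s <= smax tf B cs r.
Proof.
elim: r => [|r IH] [s Hs Hk] //=.
case: ifP => E.
- have Hs' : s < r.
    move: Hs; rewrite ltnS leq_eqVlt => /orP [/eqP Es|] //. by rewrite Es E in Hk.
  have [IH1 IH2] := IH (ex_intro2 (fun s => s < r) _ s Hs' Hk).
  split => // s' Hs'r Hk'.
  move: Hs'r; rewrite ltnS leq_eqVlt => /orP [/eqP Es|Hlt]; last exact: IH2.
  by rewrite Es E in Hk'.
- split; first by rewrite E.
  by move=> s'; rewrite ltnS.
Qed.

Lemma Kf_mono N (tf : prf N.+1) c c' s cs : c <= c' -> Kf tf c s cs != 0 -> Kf tf c' s cs = Kf tf c s cs.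
Proof.
rewrite /Kf => cc. case E: (clk tf c _) => [y|] //= _. by rewrite (clk_mono cc E).
Qed.

Definition Ef N (tf : prf N.+1) cs p := Kf tf p (smax tf p cs p.+1) cs.

Lemma Ef_mono N (tf : prf N.+1) cs B B' : B <= B' -> Ef tf cs B != 0 ->
  Ef tf cs B' != 0 /\ smax tf B cs B.+1 <= smax tf B' cs B'.+1.
Proof.
move=> BB H.
have H1 : Kf tf B' (smax tf B cs B.+1) cs != 0 by rewrite (Kf_mono BB H).
have Hlt : smax tf B cs B.+1 < B'.+1 by rewrite ltnS (leq_trans (smax_le tf B cs B.+1) BB).
have [A1 A2] : Kf tf B' (smax tf B' cs B'.+1) cs != 0 /\ _ := smax_spec (ex_intro2 _ _ (smax tf B cs B.+1) Hlt H1).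
split => //. exact: A2.
Qed.

Lemma size_bcodes bs (x : bspace bs) : size (bcodes x) = size bs.
Proof. elim: bs x => //= c bs IH [a x] /=. by rewrite IH. Qed.

Lemma filter_list (D : Type) (P : D -> Prop) (L : list D) :
  exists l, forall e, (P e /\ inl_ e L) <-> inl_ e l.
Proof.
elim: L => [|a L [l Hl]] /=; first by exists nil => e; split => // [[]].
case: (classic (P a)) => Pa.
- exists (a :: l) => e /=; split.
  + move=> [Pe [<-|Ie]]; [by left | right; apply/Hl; by split].
  + move=> [<-|/Hl [Pe Ie]]; [by split => //; left | by split => //; right].
- exists l => e; split.
  + move=> [Pe [Ea|Ie]]; [by subst | apply/Hl; by split].
  + move=> /Hl [Pe Ie]; by split => //; right.
Qed.

Lemma rec_Z N (tf : prf N.+1) : rec N.+1 (fun w => if Ef tf (drop 1 w) (nth 0 w 0) == 0 then 1 else 0).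
Proof.
apply: (rec_comp3 (b := fun a b d => if a == 0 then b else d)) rec_ifz (rec_E tf) (rec_const _ 1) (rec_const _ 0).
Qed.

Lemma rec_Gt N (tf : prf N.+1) : rec N.+2 (fun w => (Ef tf (drop 2 w) (nth 0 w 0 + nth 0 w 1)).-1).
Proof.
apply: (rec_comp1 (u := predn)) rec_pred _.
pose Gs := [:: (fun w : seq nat => nth 0 w 0 + nth 0 w 1)] ++ projs 2 N.
have Hs : size Gs = N.+1 by rewrite size_cat size_projs.
have Ha : Alls (rec N.+2) Gs.
  apply: Alls_cat; last by apply: rec_projs; rewrite !addSn add0n.
  split => //. apply: (rec_comp2 (b := addn)) rec_add _ _; by apply: rec_proj.
have := rec_comp Hs (rec_E tf) Ha.
move/rec_ext; apply => w Hw. rewrite map_cat map_projs; last by rewrite Hw !addSn add0n.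
rewrite take_drop_full; last by rewrite Hw !addSn add0n.
by rewrite /= drop0.
Qed.

Lemma pr_to_rec (bs : seq bkind) (D : Type) (lt : D -> D -> Prop) (rho : nat -> D)
  (HD : computable_poset lt rho) (F : bspace bs -> D) :
  in_MaxPR lt rho F -> in_MaxRec lt rho F.
Proof.
case: HD => [[Hirr Htr] [rinv Hr1 Hr2] _].
have rinj : injective rho by apply: can_inj Hr1.
have antis : forall a b, leD lt a b -> leD lt b a -> a = b.
  move=> a b [Hab|Eab] [Hba|Eba] //; by case: (Hirr _ (Htr _ _ _ Hab Hba)).
move=> [f [[tf Htf] Hmono Hmax]].
pose cs (x : bspace bs) := bcodes x.
have Hcs : forall x, size (cs x) = size bs by move=> x; apply: size_bcodes.
have Hgood : forall x c s, Kf tf c s (cs x) != 0 -> f x s = Some (rho (Kf tf c s (cs x)).-1).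
  move=> x c s; rewrite /Kf; case E: (clk tf c _) => [y|] //= _.
  apply/Htf; exact: clk_sound E.
have Hcomp : forall x s d, f x s = Some d ->
    exists c, forall c', c <= c' -> Kf tf c' s (cs x) != 0 /\ rho (Kf tf c' s (cs x)).-1 = d.
  move=> x s d H.
  have := H; rewrite -[d]Hr2 => /Htf /clk_complete [c Hc].
  exists c => c' cc. rewrite /Kf (clk_mono cc Hc) /=. by rewrite Hr2.
have Hex : forall x, exists p, Ef tf (cs x) p != 0.
  move=> x. have [_ [[s Hs] _]] := Hmax x.
  have [c Hc] := Hcomp _ _ _ Hs.
  exists (c + s).
  have [Hk _] := Hc (c + s) (leq_addr _ _).
  have Hlt : s < (c + s).+1 by rewrite ltnS leq_addl.
  by have [] := smax_spec (ex_intro2 (fun s' => s' < (c + s).+1) _ s Hlt Hk).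
pose p0 x := ex_minn (Hex x).
have Hp0 : forall x, Ef tf (cs x) (p0 x) != 0 /\ forall j, j < p0 x -> Ef tf (cs x) j == 0.
  move=> x; rewrite /p0; case: ex_minnP => p Hp Hmin; split => // j Hj.
  apply/negPn/negP => Hj'. have := Hmin _ Hj'. by rewrite leqNgt Hj.
pose g x t := rho (Ef tf (cs x) (p0 x + t)).-1.
pose sm x B := smax tf B (cs x) B.+1.
have HE : forall x t, Ef tf (cs x) (p0 x + t) != 0.
  move=> x t; exact: (Ef_mono (leq_addr t _) (proj1 (Hp0 x))).1.
have Hval : forall x t, f x (sm x (p0 x + t)) = Some (g x t).
  move=> x t. exact: Hgood (HE x t).
exists g; split.
- have [T HT] := build (rec_Z tf) (rec_Gt tf).
  exists T => x s n.
  have Hev : peval T (rcons (cs x) s) (Ef tf (cs x) (p0 x + s)).-1.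
    have := HT (cs x) s (p0 x) (Hcs x).
    rewrite /= drop0. apply.
    + by rewrite (negbTE (proj1 (Hp0 x))).
    + by move=> j /(proj2 (Hp0 x)) ->.
  split.
  + move=> Hn. by rewrite (peval_det Hn Hev).
  + move=> [/rinj <-]. exact: Hev.
- move=> x s s' d d' ss [<-] [<-].
  have ss2 : p0 x + s <= p0 x + s' by rewrite leq_add2l.
  have [_ Hsm] := Ef_mono ss2 (HE x s).
  exact: Hmono Hsm (Hval x s) (Hval x s').
- move=> x.
  have [[L HL] [[sd Hsd] Hle]] := Hmax x.
  have Hup : forall s e, Some (g x s) = Some e -> leD lt e (F x).
    move=> s e [<-]. exact: Hle (Hval x s).
  split; [|split] => //.
  + have [l Hl] := filter_list (fun e => exists s, Some (g x s) = Some e) L.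
    exists l => e; rewrite -Hl; split; last by case.
    move=> [s Hs]; split; first by exists s.
    apply/HL; exists (sm x (p0 x + s)); rewrite Hval; exact: Hs.
  + have [c Hc] := Hcomp _ _ _ Hsd.
    exists (c + sd); congr Some.
    set B := p0 x + (c + sd).
    have cB : c <= B by rewrite /B addnCA leq_addr.
    have [Hk _] := Hc B cB.
    have Hlt : sd < B.+1 by rewrite ltnS /B addnA leq_addl.
    have [_ Hs2] := smax_spec (ex_intro2 (fun s' => s' < B.+1) _ sd Hlt Hk).
    have Hsds := Hs2 _ Hlt Hk.
    apply: antis; first exact: Hup (erefl _).
    exact: Hmono Hsds Hsd (Hval x _).
Qed.

Theorem mainTheorem11 (bs : seq bkind) (Hbs : bs <> [::])
  (D : Type) (lt : D -> D -> Prop) (rho : nat -> D)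
  (HD : computable_poset lt rho) (F : bspace bs -> D) :
  in_MaxPR lt rho F <-> in_MaxRec lt rho F.
Proof.
split; first exact: pr_to_rec.
move=> [f [Hf Hm Hx]].
by exists (fun x s => Some (f x s)).
Qed.
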